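(* Let $(\Omega_t)_{t\in(0,T)}$ be a family of open subsets of $\mathbb{R}^{n+1}$, $\bar\Omega_t=\phi_t(\bar\Omega)$ for a smooth family of diffeomorphisms $\phi_t$, evolving by $\frac{\partial x}{\partial t}=-\nabla f(x,t)$ for $x=\phi_t(q)\in\Omega_t$, where the smooth functions $f(t)$ satisfy \[ \frac{\partial f}{\partial t}+\Delta f=|\nabla f|^2+\frac{n+1}{2\tau}\quad\text{in }\Omega_t, \] and $\tau(t)>0$ satisfies $\frac{d\tau}{dt}=-1$, for $t\in(0,T)$. Then $W=\tau(2\Delta f-|\nabla f|^2)+f-(n+1)$ satisfies \[ \Big(\frac{d}{dt}+\Delta\Big)W=2\tau\Big|\nabla_i\nabla_j f-\frac{\delta_{ij}}{2\tau}\Big|^2+\nabla W\cdot\nabla f\quad\text{in }\Omega_t. \]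
   Context: For a function $F(x,t)$ on the moving domains, $\frac{dF}{dt}$ denotes the total time derivative along the trajectories of the flow, i.e. $\frac{dF}{dt}(\phi_t(q),t)=\frac{\partial}{\partial t}\big[F(\phi_t(q),t)\big]$; thus $\frac{dF}{dt}=\frac{\partial F}{\partial t}-\nabla F\cdot\nabla f$. All gradients, Laplacians and Hessians are Euclidean. *)

(* Defs.v *)
From HB Require Import structures.
From mathcomp Require Import all_boot all_order all_algebra.
From mathcomp Require Import all_classical all_reals all_analysis.
Set Implicit Arguments. Unset Strict Implicit. Unset Printing Implicit Defensive.
Import Order.TTheory GRing.Theory Num.Theory.
Import numFieldNormedType.Exports.
Local Open Scope classical_set_scope.
Local Open Scope ring_scope.

Section Calculus.
Variables (R : realType) (n : nat).
Notation V := 'rV[R]_(n.+1).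

Definition sp_pd (i : 'I_(n.+1)) (g : V -> R -> R) : V -> R -> R :=
  fun x t => derive1 (fun s : R => g (x + s *: delta_mx 0 i) t) 0.

Definition t_pd (g : V -> R -> R) : V -> R -> R :=
  fun x t => derive1 (fun s : R => g x s) t.

Definition pdir (d : option 'I_(n.+1)) (g : V -> R -> R) : V -> R -> R :=
  match d with Some i => sp_pd i g | None => t_pd g end.

Definition derivable_dir (d : option 'I_(n.+1)) (g : V -> R -> R) (x : V) (t : R) : Prop :=
  match d with
  | Some i => derivable (fun s : R => g (x + s *: delta_mx 0 i) t) 0 1
  | None => derivable (fun s : R => g x s) t 1
  end.

Definition iter_pd (ds : seq (option 'I_(n.+1))) (g : V -> R -> R) : V -> R -> R :=
  foldr pdir g ds.

Definition smooth_on (S : set (V * R)) (g : V -> R -> R) : Prop :=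
  forall ds : seq (option 'I_(n.+1)), forall p : V * R, S p ->
    (forall d, derivable_dir d (iter_pd ds g) p.1 p.2) /\
    {for p, continuous (fun q : V * R => iter_pd ds g q.1 q.2)}.

Definition grad (g : V -> R -> R) (x : V) (t : R) : V :=
  \row_i sp_pd i g x t.

Definition dotv (u v : V) : R := \sum_i u 0 i * v 0 i.

Definition lap (g : V -> R -> R) (x : V) (t : R) : R :=
  \sum_i sp_pd i (sp_pd i g) x t.

(* total time derivative along the flow dx/dt = - grad f (see context):
   dF/dt = dF/dt(partial) - grad F . grad f *)
Definition ddt (f F : V -> R -> R) (x : V) (t : R) : R :=
  t_pd F x t - dotv (grad F x t) (grad f x t).

End Calculus.

(* Main.v *)
Require Import Defs.
From HB Require Import structures.
From mathcomp Require Import all_boot all_order all_algebra.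
From mathcomp Require Import all_classical all_reals all_analysis.
From mathcomp Require Import ring lra.
Import Order.TTheory GRing.Theory Num.Theory.
Import numFieldNormedType.Exports.
Local Open Scope classical_set_scope.
Local Open Scope ring_scope.
Set Implicit Arguments. Unset Strict Implicit. Unset Printing Implicit Defensive.
Section Schwarz.
Variable R : realType.

Lemma mvt2 (G G1 G12 : R -> R -> R) (e a : R) :
  (forall u v : R, `|u| < e -> `|v| < e ->
     is_derive u 1 (fun u' => G u' v) (G1 u v) /\
     is_derive v 1 (fun v' => G1 u v') (G12 u v)) ->
  0 < a -> a < e ->
  exists xi eta, [/\ 0 < xi < a, 0 < eta < a &
    G a a - G a 0 - G 0 a + G 0 0 = G12 xi eta * (a * a)].
Proof.
move=> hd a0 ae.
have inr w : 0 <= w <= a -> `|w| < e.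
  by move=> /andP[w0 wa]; rewrite ger0_norm //; apply: le_lt_trans ae.
have a0' : 0 <= a <= a by apply/andP; split; lra.
have z0 : (0:R) <= 0 <= a by apply/andP; split; lra.
pose phi u := G u a - G u 0.
have [xi xiI Hxi] : exists2 xi, xi \in `]0, a[ &
    phi a - phi 0 = (G1 xi a - G1 xi 0) * (a - 0).
  apply: MVT => //.
  - move=> x; rewrite in_itv /= => /andP[x0 xa].
    have xr : `|x| < e by apply: inr; rewrite !ltW.
    apply: is_deriveB; [exact: (hd _ _ xr (inr _ a0')).1|exact: (hd _ _ xr (inr _ z0)).1].
  - apply: derivable_within_continuous => x; rewrite in_itv /= => xI.
    apply: derivableB.
      by have [[? _] _] := hd x a (inr _ xI) (inr _ a0').
    by have [[? _] _] := hd x 0 (inr _ xI) (inr _ z0).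
move: xiI; rewrite in_itv /= => /andP[xi0 xia].
have xir : 0 <= xi <= a by apply/andP; split; lra.
have [eta etaI Heta] : exists2 eta, eta \in `]0, a[ &
    G1 xi a - G1 xi 0 = G12 xi eta * (a - 0).
  apply: MVT => //.
  - move=> x; rewrite in_itv /= => /andP[x0 xa].
    have xr : 0 <= x <= a by apply/andP; split; lra.
    exact: (hd _ _ (inr _ xir) (inr x xr)).2.
  - apply: derivable_within_continuous => x; rewrite in_itv /= => xI.
    by have [_ [? _]] := hd xi x (inr _ xir) (inr _ xI).
move: etaI; rewrite in_itv /= => /andP[eta0 etaa].
exists xi, eta; split; rewrite ?xi0 ?xia ?eta0 ?etaa //.
move: Hxi; rewrite /phi Heta subr0 -mulrA => <-.
by rewrite /phi; lra.
Qed.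

Lemma schwarz2 (H H1 H2 H12 H21 : R -> R -> R) (e : R) :
  0 < e ->
  (forall u v : R, `|u| < e -> `|v| < e ->
     [/\ is_derive u 1 (fun u' => H u' v) (H1 u v),
         is_derive v 1 (fun v' => H u v') (H2 u v),
         is_derive v 1 (fun v' => H1 u v') (H12 u v) &
         is_derive u 1 (fun u' => H2 u' v) (H21 u v)]) ->
  (forall eps : R, 0 < eps -> exists2 d : R, 0 < d & forall u v : R, `|u| < d -> `|v| < d ->
      `|H12 u v - H12 0 0| < eps /\ `|H21 u v - H21 0 0| < eps) ->
  H12 0 0 = H21 0 0.
Proof.
move=> e0 hd hc; apply/eqP/negPn/negP => hne.
have eps0 : 0 < `|H12 0 0 - H21 0 0| / 2.
  by rewrite divr_gt0 // normr_gt0 subr_eq0.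
have [d d0 hcd] := hc _ eps0.
pose a := Num.min d e / 2.
have a0 : 0 < a by rewrite /a divr_gt0 // lt_min d0 e0.
have ad : a < d.
  have : Num.min d e <= d by rewrite ge_min lexx.
  by rewrite /a; lra.
have ae : a < e.
  have : Num.min d e <= e by rewrite ge_min lexx orbT.
  by rewrite /a; lra.
have [xi [eta [/andP[xi0 xia] /andP[eta0 etaa] E1]]] :=
  @mvt2 H H1 H12 e a (fun u v hu hv => let: And4 h1 _ h3 _ := hd u v hu hv in conj h1 h3) a0 ae.
have [xi' [eta' [/andP[xi0' xia'] /andP[eta0' etaa'] E2]]] :=
  @mvt2 (fun u v => H v u) (fun u v => H2 v u) (fun u v => H21 v u) e a
    (fun u v hu hv => let: And4 _ h2 _ h4 := hd v u hv hu in conj h2 h4) a0 ae.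
have aa : a * a != 0 by rewrite mulf_neq0 // gt_eqF.
have eq : H12 xi eta = H21 eta' xi'.
  apply: (mulIf aa); rewrite -E1 -E2 /=; lra.
have nr w : 0 < w < a -> `|w| < d.
  by move=> /andP[w0 wa]; rewrite gtr0_norm //; lra.
have [c1 _] := hcd xi eta (nr _ (introT andP (conj xi0 xia))) (nr _ (introT andP (conj eta0 etaa))).
have [_ c2] := hcd eta' xi' (nr _ (introT andP (conj eta0' etaa'))) (nr _ (introT andP (conj xi0' xia'))).
have hD : H12 0 0 - H21 0 0 = - (H12 xi eta - H12 0 0) + (H21 eta' xi' - H21 0 0).
  by rewrite eq; lra.
have := ler_normD (- (H12 xi eta - H12 0 0)) (H21 eta' xi' - H21 0 0).
rewrite -hD normrN => h.
have : `|H12 0 0 - H21 0 0| < `|H12 0 0 - H21 0 0| by lra.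
by rewrite ltxx.
Qed.

End Schwarz.
Section Geo.
Variables (R : realType) (n : nat).
Local Notation V := 'rV[R]_(n.+1).

Definition ev (g : V -> R -> R) (q : V * R) := g q.1 q.2.
Definition sh (d : option 'I_(n.+1)) (u : R) (p : V * R) : V * R :=
  match d with Some i => (p.1 + u *: delta_mx 0 i, p.2) | None => (p.1, p.2 + u) end.

Lemma sh0 d p : sh d 0 p = p.
Proof. by case: d => [i|]; case: p => x t /=; rewrite ?scale0r addr0. Qed.

Lemma sh_add d a b p : sh d (a + b) p = sh d b (sh d a p).
Proof. by case: d => [i|] /=; rewrite ?scalerDl addrA. Qed.

Lemma sh_comm d1 d2 u v p : sh d1 u (sh d2 v p) = sh d2 v (sh d1 u p).
Proof. by case: d1 => [i|]; case: d2 => [j|] //=; rewrite addrAC. Qed.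

Lemma derive1_shift (F : R -> R) a :
  derive1 F a = derive1 (fun h => F (a + h)) 0.
Proof.
rewrite /derive1 addr0.
suff -> : (fun h => h^-1 *: (F (h + a) - F a)) = (fun h => h^-1 *: (F (a + (h + 0)) - F a)) by [].
by rewrite funeqE => h /=; rewrite addr0 (addrC a).
Qed.

Lemma derivable_shift (F : R -> R) a :
  derivable (fun h => F (a + h)) 0 1 -> derivable F a 1.
Proof.
move=> h; have [_] := derivable1P F a 1; apply.
suff -> : (fun h : R => F (h%:A + a)) = (fun h => F (a + h)) by [].
by apply: funext => x; rewrite [x%:A]mulr1 addrC.
Qed.

Lemma is_derive_shift' (F : R -> R) a :
  derivable (fun h => F (a + h)) 0 1 ->
  is_derive a 1 F (derive1 (fun h => F (a + h)) 0).
Proof.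
move=> h; apply: DeriveDef; first exact: derivable_shift.
by rewrite -derive1E derive1_shift.
Qed.

Lemma pdir_sh d g q : pdir d g q.1 q.2 = derive1 (fun u => ev g (sh d u q)) 0.
Proof.
case: d => [i|] //=; rewrite /t_pd derive1_shift //.
Qed.

Lemma dd_sh d g q : derivable_dir d g q.1 q.2 -> derivable (fun u => ev g (sh d u q)) 0 1.
Proof.
case: d => [i|] //= h.
have [h1 _] := derivable1P (fun s => g q.1 s) q.2 1.
have [_ h2] := derivable1P (fun u => ev g (q.1, q.2 + u)) 0 1.
apply: h2; move: (h1 h).
suff -> : (fun h : R => ev g (q.1, q.2 + (h%:A + 0))) = (fun h => g q.1 (h%:A + q.2)) by [].
by apply: funext => x; rewrite addr0 addrC.
Qed.

Lemma dir_is_derive d g q u0 :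
  derivable_dir d g (sh d u0 q).1 (sh d u0 q).2 ->
  is_derive u0 1 (fun u => ev g (sh d u q)) (pdir d g (sh d u0 q).1 (sh d u0 q).2).
Proof.
move=> /dd_sh h; rewrite pdir_sh.
have e : (fun u => ev g (sh d u (sh d u0 q))) = (fun h => ev g (sh d (u0 + h) q)).
  by apply: funext => x; rewrite sh_add.
rewrite e in h *; exact: is_derive_shift'.
Qed.

Lemma nbool (u : R) (b : bool) : `|u * b%:R| <= `|u|.
Proof. by case: b; rewrite ?mulr1 ?mulr0 ?normr0. Qed.

Lemma hlp2 (y A B e : R) : `|A| + `|B| < e -> `|y - (y + A + B)| < e.
Proof.
move=> h; have -> : y - (y + A + B) = -(A + B) by ring.
by rewrite normrN; apply: le_lt_trans (ler_normD _ _) h.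
Qed.

Lemma hlp1 (y A e : R) : `|A| < e -> `|y - (y + A)| < e.
Proof. move=> h; have -> : y - (y + A) = - A by ring.
by rewrite normrN. Qed.

Lemma ball_sh d1 d2 p (e u v : R) : 0 < e -> `|u| < e / 2 -> `|v| < e / 2 ->
  ball p e (sh d1 u (sh d2 v p)).
Proof.
case: p => x t e0 hu hv.
have huv : `|v| + `|u| < e by lra.
have hu' : `|u| < e by lra.
have hv' : `|v| < e by lra.
case: d1 => [i|]; case: d2 => [j|]; split => /=; rewrite /ball /=;
  try (split => // a b; rewrite /ball /= ?mxE).
- apply: hlp2; apply: le_lt_trans huv; exact: lerD (nbool _ _) (nbool _ _).
- by rewrite subrr normr0.
- by apply: hlp1; apply: le_lt_trans hu'; exact: nbool.
- exact: hlp1.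
- by apply: hlp1; apply: le_lt_trans hv'; exact: nbool.
- exact: hlp1.
- by rewrite subrr normr0.
- by rewrite -addrA; apply: hlp1; apply: le_lt_trans (ler_normD _ _) huv.
Qed.

Lemma near_S (S : set (V * R)) p : open S -> S p ->
  exists2 e : R, 0 < e & forall d1 d2 u v, `|u| < e -> `|v| < e -> S (sh d1 u (sh d2 v p)).
Proof.
move=> oS Sp.
have : open_nbhs p S by [].
rewrite open_nbhsE => -[_ /nbhs_ballP[d d0 hb]].
exists (d / 2); first by rewrite divr_gt0.
by move=> d1 d2 u v hu hv; apply: hb; apply: ball_sh.
Qed.

Lemma cont_sh (K : V * R -> R) p : {for p, continuous K} ->
  forall eps : R, 0 < eps -> exists2 d : R, 0 < d & forall d1 d2 u v,
    `|u| < d -> `|v| < d -> `|K (sh d1 u (sh d2 v p)) - K p| < eps.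
Proof.
move=> hc eps e0.
have := cvgr_dist_lt _ _ hc _ e0.
move=> /(_ (nbhs_filter p)) /nbhs_ballP[d d0 hb].
exists (d / 2); first by rewrite divr_gt0.
move=> d1 d2 u v hu hv; rewrite distrC; apply: hb; exact: ball_sh.
Qed.


Lemma dir_is_derive2 d1 d2 g p u v :
  derivable_dir d2 g (sh d1 u (sh d2 v p)).1 (sh d1 u (sh d2 v p)).2 ->
  is_derive v 1 (fun v' => ev g (sh d1 u (sh d2 v' p)))
    (pdir d2 g (sh d1 u (sh d2 v p)).1 (sh d1 u (sh d2 v p)).2).
Proof.
rewrite sh_comm => h.
have -> : (fun v' => ev g (sh d1 u (sh d2 v' p))) = (fun v' => ev g (sh d2 v' (sh d1 u p))).
  by apply: funext => w; rewrite sh_comm.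
exact: dir_is_derive.
Qed.

Lemma schwarz_dir (S : set (V * R)) (g : V -> R -> R) d1 d2 p : open S -> S p ->
  (forall q, S q -> [/\ derivable_dir d1 g q.1 q.2, derivable_dir d2 g q.1 q.2,
       derivable_dir d2 (pdir d1 g) q.1 q.2 & derivable_dir d1 (pdir d2 g) q.1 q.2]) ->
  {for p, continuous (ev (pdir d2 (pdir d1 g)))} ->
  {for p, continuous (ev (pdir d1 (pdir d2 g)))} ->
  pdir d2 (pdir d1 g) p.1 p.2 = pdir d1 (pdir d2 g) p.1 p.2.
Proof.
move=> oS Sp hd c1 c2.
have [e e0 hS] := near_S oS Sp.
have := @schwarz2 R (fun u v => ev g (sh d1 u (sh d2 v p)))
  (fun u v => ev (pdir d1 g) (sh d1 u (sh d2 v p)))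
  (fun u v => ev (pdir d2 g) (sh d1 u (sh d2 v p)))
  (fun u v => ev (pdir d2 (pdir d1 g)) (sh d1 u (sh d2 v p)))
  (fun u v => ev (pdir d1 (pdir d2 g)) (sh d1 u (sh d2 v p))) e e0.
rewrite /= !sh0; apply.
  move=> u v hu hv; have [a1 a2 a3 a4] := hd _ (hS d1 d2 u v hu hv); split.
  - exact: dir_is_derive.
  - exact: dir_is_derive2.
  - exact: dir_is_derive2.
  - exact: dir_is_derive.
move=> eps eps0.
have [k1 k10 hk1] := cont_sh c1 eps0.
have [k2 k20 hk2] := cont_sh c2 eps0.
exists (Num.min k1 k2); first by rewrite lt_min k10 k20.
move=> u v; rewrite !lt_min => /andP[u1 u2] /andP[v1 v2]; split.
  exact: hk1.
exact: hk2.
Qed.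

End Geo.

Section Comb.
Variable R : realType.
Implicit Types (F G : R -> R) (a dF dG c : R).

Definition isd (a : R) (F : R -> R) (l : R) : Prop := is_derive a 1 F l.

Lemma ide F a l l' : isd a F l' -> l' = l -> isd a F l.
Proof. by move=> h <-. Qed.

Lemma isdD F G a dF dG : isd a F dF -> isd a G dG ->
  isd a (fun u => F u + G u) (dF + dG).
Proof. move=> h1 h2; exact: (is_deriveD h1 h2). Qed.

Lemma isdB F G a dF dG : isd a F dF -> isd a G dG ->
  isd a (fun u => F u - G u) (dF - dG).
Proof. move=> h1 h2; exact: (is_deriveB h1 h2). Qed.

Lemma isdM F G a dF dG : isd a F dF -> isd a G dG ->
  isd a (fun u => F u * G u) (dF * G a + F a * dG).
Proof.
move=> h1 h2; have h := is_deriveM h1 h2.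
have -> : dF * G a + F a * dG = F a *: dG + G a *: dF.
  rewrite -[F a *: dG]/(F a * dG) -[G a *: dF]/(G a * dF); ring.
exact: h.
Qed.

Lemma isdN F a dF : isd a F dF -> isd a (fun u => - F u) (- dF).
Proof. move=> h1; exact: (is_deriveN h1). Qed.

Lemma isdC a c : isd a (fun _ : R => c) 0.
Proof. exact: is_derive_cst. Qed.

Lemma isdS m (F : 'I_m -> R -> R) a (dF : 'I_m -> R) :
  (forall i, isd a (F i) (dF i)) ->
  isd a (fun u => \sum_(i < m) F i u) (\sum_(i < m) dF i).
Proof.
move=> h; rewrite /isd; apply: ide; last reflexivity.
have := @is_derive_sum _ _ _ _ F a 1 dF h.
by rewrite fct_sumE.
Qed.

End Comb.

Section Main.
Variables (R : realType) (n : nat).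
Local Notation V := 'rV[R]_(n.+1).
Variables (S : set (V * R)) (f : V -> R -> R).
Hypotheses (oS : open S) (hf : smooth_on S f).

Lemma sm_der ds d (x : V) (t : R) : S (x, t) -> derivable_dir d (iter_pd ds f) x t.
Proof. by move=> h; have [] := hf ds h. Qed.

Lemma sm_cont ds p : S p -> {for p, continuous (ev (iter_pd ds f))}.
Proof. by move=> h; have [] := hf ds h. Qed.

Lemma sp_val (k : 'I_n.+1) (g : V -> R -> R) (x : V) (t l : R) :
  isd (0:R) (fun u : R => g (x + u *: delta_mx 0 k) t) l -> sp_pd k g x t = l.
Proof. by rewrite /isd => h; rewrite /sp_pd derive1E derive_val. Qed.

Lemma t_val (g : V -> R -> R) (x : V) (t l : R) :
  isd t (fun s : R => g x s) l -> t_pd g x t = l.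
Proof. by rewrite /isd => h; rewrite /t_pd derive1E derive_val. Qed.

Lemma sp_leaf (k : 'I_n.+1) (g : V -> R -> R) (x : V) (t : R) : derivable_dir (Some k) g x t ->
  isd (0:R) (fun u : R => g (x + u *: delta_mx 0 k) t) (sp_pd k g x t).
Proof. by move=> h; rewrite /isd /sp_pd derive1E; apply: derivableP. Qed.

Lemma t_leaf (g : V -> R -> R) (x : V) (t : R) : derivable_dir None g x t ->
  isd t (fun s : R => g x s) (t_pd g x t).
Proof. by move=> h; rewrite /isd /t_pd derive1E; apply: derivableP. Qed.

Lemma t_leaf' (g : V -> R -> R) (x : V) (t : R) : derivable_dir None g x t ->
  isd t (g x) (t_pd g x t).
Proof. exact: t_leaf. Qed.

Lemma pdir_congr d (g1 g2 : V -> R -> R) (x : V) (t : R) : S (x, t) ->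
  (forall y s, S (y, s) -> g1 y s = g2 y s) -> pdir d g1 x t = pdir d g2 x t.
Proof.
move=> Sp heq.
rewrite -[x]/((x, t).1) -[t]/((x, t).2) !pdir_sh !derive1E.
apply: near_eq_derive.
have [e e0 hS] := near_S oS Sp.
apply/nbhs_ballP; exists e => // u /=; rewrite /ball /= sub0r normrN => hu.
have := hS d d u 0 hu; rewrite normr0 => /(_ e0); rewrite sh0 /ev.
by case: (sh d u (x, t)) => y s /= /heq.
Qed.

Lemma swap ds d1 d2 (x : V) (t : R) : S (x, t) ->
  pdir d2 (pdir d1 (iter_pd ds f)) x t = pdir d1 (pdir d2 (iter_pd ds f)) x t.
Proof.
move=> Sp; rewrite -[x]/((x, t).1) -[t]/((x, t).2).
apply: (schwarz_dir oS Sp).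
- by case=> y s Sq; split; [exact: (sm_der ds)|exact: (sm_der ds)
     |exact: (sm_der (d1 :: ds))|exact: (sm_der (d2 :: ds))].
- exact: (sm_cont (ds:=d2 :: d1 :: ds) Sp).
- exact: (sm_cont (ds:=d1 :: d2 :: ds) Sp).
Qed.

Definition Sm (g : V -> R -> R) := exists ds, g = iter_pd ds f.
Lemma sm_f : Sm f. Proof. by exists [::]. Qed.
Lemma sm_sp i g : Sm g -> Sm (sp_pd i g).
Proof. by case=> ds ->; exists (Some i :: ds). Qed.
Lemma sm_t g : Sm g -> Sm (t_pd g).
Proof. by case=> ds ->; exists (None :: ds). Qed.
Lemma sm_der' g d (x : V) (t : R) : Sm g -> S (x, t) -> derivable_dir d g x t.
Proof. by case=> ds -> Sp; apply: sm_der. Qed.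

Ltac smt := repeat first [ apply: sm_f | apply: sm_sp | apply: sm_t ].
Ltac lf := first [apply: sp_leaf | apply: t_leaf | apply: t_leaf']; apply: sm_der'; [smt | assumption].
Ltac bld1 := cbv beta; lazymatch goal with
 | |- isd _ (fun _ => _ - _) _ => apply: isdB
 | |- isd _ (fun _ => _ + _) _ => apply: isdD
 | |- isd _ (fun _ => - _) _ => apply: isdN
 | |- isd _ (fun _ => _ * _) _ => apply: isdM
 | |- _ => first [eassumption | lf | apply: isdS => ? | apply: isdC]
 end.
Ltac bld := repeat bld1.

Local Notation D := sp_pd.
Local Notation Dt := t_pd.
Variables (tau : R -> R) (c : R).
Hypothesis hE : forall x t, S (x, t) ->
  Dt f x t + \sum_i D i (D i f) x t = \sum_i D i f x t * D i f x t + c / (2 * tau t).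

Lemma B1 j (x : V) (t : R) : S (x, t) ->
  D j (Dt f) x t + \sum_i D j (D i (D i f)) x t
  = \sum_i (D j (D i f) x t * D i f x t + D i f x t * D j (D i f) x t).
Proof.
move=> Sp.
have h := pdir_congr (Some j) (g1 := fun y s => Dt f y s + \sum_i D i (D i f) y s)
  (g2 := fun y s => \sum_i D i f y s * D i f y s + c / (2 * tau s)) Sp
  (fun y s hs => hE hs).
change (D j (fun y s => Dt f y s + \sum_i D i (D i f) y s) x t =
        D j (fun y s => \sum_i D i f y s * D i f y s + c / (2 * tau s)) x t) in h.
transitivity (D j (fun y s => Dt f y s + \sum_i D i (D i f) y s) x t).
  by symmetry; apply: sp_val; bld.
rewrite h; apply: sp_val; apply: ide; first by bld.
by cbv beta; rewrite !scale0r !addr0 mul0r mulr0 !addr0.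
Qed.

Lemma B2 j (x : V) (t : R) : S (x, t) ->
  D j (D j (Dt f)) x t + \sum_i D j (D j (D i (D i f))) x t
  = \sum_i ((D j (D j (D i f)) x t * D i f x t + D j (D i f) x t * D j (D i f) x t)
       + (D j (D i f) x t * D j (D i f) x t + D i f x t * D j (D j (D i f)) x t)).
Proof.
move=> Sp.
have h := pdir_congr (Some j) (g1 := fun y s => D j (Dt f) y s + \sum_i D j (D i (D i f)) y s)
  (g2 := fun y s => \sum_i (D j (D i f) y s * D i f y s + D i f y s * D j (D i f) y s)) Sp
  (fun y s hs => B1 j hs).
change (D j (fun y s => D j (Dt f) y s + \sum_i D j (D i (D i f)) y s) x t =
        D j (fun y s => \sum_i (D j (D i f) y s * D i f y s + D i f y s * D j (D i f) y s)) x t) in h.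
transitivity (D j (fun y s => D j (Dt f) y s + \sum_i D j (D i (D i f)) y s) x t).
  by symmetry; apply: sp_val; bld.
rewrite h; apply: sp_val; apply: ide; first by bld.
by cbv beta; rewrite !scale0r !addr0.
Qed.

Definition Wf (y : V) (s : R) :=
  tau s * (2 * \sum_i D i (D i f) y s - \sum_i D i f y s * D i f y s) + f y s - (n.+1)%:R.

Lemma Ck k (y : V) (s : R) : S (y, s) ->
  D k Wf y s = tau s * (2 * \sum_i D k (D i (D i f)) y s
     - \sum_i (D k (D i f) y s * D i f y s + D i f y s * D k (D i f) y s)) + D k f y s.
Proof.
move=> Sp; rewrite /Wf; apply: sp_val; apply: ide; first by bld.
by cbv beta; rewrite !scale0r !addr0 !mul0r !add0r subr0.
Qed.
Lemma Ckk k (x : V) (t : R) : S (x, t) ->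
  D k (D k Wf) x t = tau t * (2 * \sum_i D k (D k (D i (D i f))) x t
     - \sum_i ((D k (D k (D i f)) x t * D i f x t + D k (D i f) x t * D k (D i f) x t)
              + (D k (D i f) x t * D k (D i f) x t + D i f x t * D k (D k (D i f)) x t)))
     + D k (D k f) x t.
Proof.
move=> Sp.
transitivity (D k (fun y s => tau s * (2 * \sum_i D k (D i (D i f)) y s
     - \sum_i (D k (D i f) y s * D i f y s + D i f y s * D k (D i f) y s)) + D k f y s) x t).
  exact: (pdir_congr (Some k) Sp (fun y s hs => Ck k hs)).
apply: sp_val; apply: ide; first by bld.
by cbv beta; rewrite !scale0r !addr0 !mul0r !add0r.
Qed.

Hypothesis htau : forall (x : V) (t : R), S (x, t) -> isd t tau (-1).

Lemma Ct (x : V) (t : R) : S (x, t) ->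
  Dt Wf x t = -1 * (2 * \sum_i D i (D i f) x t - \sum_i D i f x t * D i f x t)
    + tau t * (2 * \sum_i Dt (D i (D i f)) x t
        - \sum_i (Dt (D i f) x t * D i f x t + D i f x t * Dt (D i f) x t)) + Dt f x t.
Proof.
move=> Sp; have ht := htau Sp.
rewrite /Wf; apply: t_val; apply: ide; first by bld.
by cbv beta; rewrite !mul0r !add0r subr0.
Qed.

Lemma K2 j (x : V) (t : R) : S (x, t) -> Dt (D j f) x t = D j (Dt f) x t.
Proof. move=> Sp. have h := (swap [::] (Some j) None Sp). exact: h. Qed.
Lemma K1 i (x : V) (t : R) : S (x, t) -> Dt (D i (D i f)) x t = D i (D i (Dt f)) x t.
Proof.
move=> Sp; transitivity (D i (Dt (D i f)) x t).
  exact: (swap [:: Some i] (Some i) None Sp).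
exact: (pdir_congr (Some i) Sp (fun y s hs => K2 i hs)).
Qed.

Lemma K3 i k (x : V) (t : R) : S (x, t) -> D i (D i (D k f)) x t = D k (D i (D i f)) x t.
Proof.
move=> Sp; transitivity (D i (D k (D i f)) x t).
  exact: (pdir_congr (Some i) Sp (fun y s hs => swap [::] (Some k) (Some i) hs)).
exact: (swap [:: Some i] (Some k) (Some i) Sp).
Qed.
End Main.

Section Alg.
Variable R : realType.

Lemma sum_delta m (F : 'I_m -> R) i : \sum_j F j * (i == j)%:R = F i.
Proof.
rewrite (bigD1 i) //= eqxx mulr1 big1 ?addr0 // => j hj.
by rewrite eq_sym (negbTE hj) mulr0.
Qed.

Lemma sum_delta1 m (i : 'I_m) : \sum_j ((i == j)%:R : R) = 1.
Proof.
transitivity (\sum_j (1:R) * (i == j)%:R); first by apply: eq_bigr => j _; rewrite mul1r.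
exact: (@sum_delta m (fun _ => (1:R)) i).
Qed.

Lemma sq_delta (x tau : R) (b : bool) : tau != 0 ->
  (x - b%:R / (2 * tau)) ^+ 2 = x ^+ 2 - (x * b%:R) / tau + b%:R / (4 * tau ^+ 2).
Proof. by move=> t0; case: b => /=; field. Qed.

Lemma final_alg m (tau c L G Dtf : R) (a th q Dti Tt : 'I_m -> R) (h r : 'I_m -> 'I_m -> R) :
  tau != 0 -> c = m%:R ->
  L = \sum_i h i i -> G = \sum_i a i * a i ->
  Dtf = G - L + c / (2 * tau) ->
  (forall i, Dti i = \sum_k (h i k * a k + a k * h i k) - th i) ->
  (forall i, Tt i = \sum_k ((r i k * a k + h i k * h i k) + (h i k * h i k + a k * r i k)) - q i) ->
  (forall i, th i = \sum_k r k i) ->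
  (-1 * (2 * L - G) + tau * (2 * \sum_i Tt i - \sum_i (Dti i * a i + a i * Dti i)) + Dtf)
   - \sum_k (tau * (2 * th k - \sum_i (h k i * a i + a i * h k i)) + a k) * a k
   + \sum_k (tau * (2 * q k - \sum_i ((r k i * a i + h k i * h k i) + (h k i * h k i + a i * r k i))) + h k k)
  = 2 * tau * (\sum_i \sum_j (h i j - (i == j)%:R / (2 * tau)) ^+ 2)
    + \sum_k (tau * (2 * th k - \sum_i (h k i * a i + a i * h k i)) + a k) * a k.
Proof.
move=> t0 hc hL hG hDtf hDti hTt hth.
pose P i := \sum_k (h i k * a k + a k * h i k).
pose Z i := \sum_k ((r i k * a k + h i k * h i k) + (h i k * h i k + a k * r i k)).
pose H2 := \sum_i \sum_k h i k ^+ 2.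
pose AR := \sum_i \sum_k a k * r i k.
have s1 : \sum_i (Dti i * a i + a i * Dti i) = 2 * \sum_i a i * P i - 2 * \sum_i a i * th i.
  rewrite !mulr_sumr -sumrB; apply: eq_bigr => i _; rewrite hDti /P. move: (\sum_k _) => s. ring.
have s2 : \sum_i Tt i = \sum_i Z i - \sum_i q i.
  by rewrite -sumrB; apply: eq_bigr => i _; rewrite hTt.
have s3 : \sum_k (tau * (2 * th k - \sum_i (h k i * a i + a i * h k i)) + a k) * a k
    = tau * (2 * \sum_k a k * th k - \sum_k a k * P k) + G.
  rewrite hG !mulr_sumr -sumrB mulr_sumr -big_split; apply: eq_bigr => k _ /=; rewrite /P; move: (\sum_i _) => s; ring.
have s4 : \sum_k (tau * (2 * q k - \sum_i ((r k i * a i + h k i * h k i) + (h k i * h k i + a i * r k i))) + h k k)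
    = tau * (2 * \sum_k q k - \sum_k Z k) + L.
  rewrite hL !mulr_sumr -sumrB mulr_sumr -big_split; apply: eq_bigr => k _ /=; rewrite /Z; move: (\sum_i _) => s; ring.
have s5 : \sum_i Z i = 2 * AR + 2 * H2.
  rewrite /AR /H2 !mulr_sumr -big_split; apply: eq_bigr => i _ /=.
  rewrite /Z !mulr_sumr -big_split; apply: eq_bigr => k _ /=; ring.
have s7 : AR = \sum_k a k * th k.
  rewrite /AR exchange_big; apply: eq_bigr => k _; rewrite hth mulr_sumr.
  by apply: eq_bigr.
have s6 : \sum_i \sum_j (h i j - (i == j)%:R / (2 * tau)) ^+ 2
    = H2 - L / tau + c / (4 * tau ^+ 2).
  transitivity (\sum_i \sum_j (h i j ^+ 2 - (h i j * (i == j)%:R) / tau + (i == j)%:R / (4 * tau ^+ 2))).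
    by apply: eq_bigr => i _; apply: eq_bigr => j _; apply: sq_delta.
  rewrite (eq_bigr (fun i => \sum_j h i j ^+ 2 - h i i / tau + 1 / (4 * tau ^+ 2))); last first.
    move=> i _; rewrite big_split /= sumrB -!mulr_suml sum_delta sum_delta1 //.
  rewrite big_split /= sumrB -!mulr_suml -hL sumr_const card_ord hc /H2.
  by [].
rewrite s1 s2 s3 s4 s6 hDtf.
rewrite s5 s7.
move: (\sum_(k < m) a k * th k) (\sum_(i < m) q i) (\sum_(i < m) a i * P i) => X Y Q.
by field.
Qed.
End Alg.

Lemma dotv_grad (R : realType) (n : nat) (g h : 'rV[R]_(n.+1) -> R -> R) x t :
  dotv (grad g x t) (grad h x t) = \sum_i sp_pd i g x t * sp_pd i h x t.
Proof. by rewrite /dotv; apply: eq_bigr => i _; rewrite !mxE. Qed.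

Unset Implicit Arguments.

Theorem proposition3p1 (R : realType) (n : nat) (T : R)
  (Omega0 : set 'rV[R]_(n.+1)) (Omega : R -> set 'rV[R]_(n.+1))
  (phi : R -> 'rV[R]_(n.+1) -> 'rV[R]_(n.+1))
  (f : 'rV[R]_(n.+1) -> R -> R) (tau : R -> R) :
  open Omega0 ->
  (forall t, 0 < t < T -> open (Omega t)) ->
  (* the space-time domain swept by the moving domains is open *)
  open [set p : 'rV[R]_(n.+1) * R | 0 < p.2 < T /\ Omega p.2 p.1] ->
  (* phi_t : closure Omega0 -> closure Omega_t is a bijection, smooth in (q,t) *)
  (forall t, 0 < t < T ->
     {in closure Omega0 &, injective (phi t)} /\
     phi t @` closure Omega0 = closure (Omega t)) ->
  (forall i : 'I_(n.+1),
     smooth_on [set p : 'rV[R]_(n.+1) * R | 0 < p.2 < T]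
               (fun q t => phi t q 0 i)) ->
  (* evolution dx/dt = - grad f(x,t) for x = phi_t(q) in Omega_t *)
  (forall t q, 0 < t < T -> closure Omega0 q -> Omega t (phi t q) ->
     forall i : 'I_(n.+1),
       derive1 (fun s => phi s q 0 i) t = - sp_pd i f (phi t q) t) ->
  (* f smooth *)
  smooth_on [set p : 'rV[R]_(n.+1) * R | 0 < p.2 < T /\ Omega p.2 p.1] f ->
  (* the equation for f *)
  (forall t x, 0 < t < T -> Omega t x ->
     t_pd f x t + lap f x t
       = dotv (grad f x t) (grad f x t) + (n.+1)%:R / (2 * tau t)) ->
  (* tau > 0, dtau/dt = -1 *)
  (forall t, 0 < t < T -> 0 < tau t /\ is_derive t 1 tau (-1)) ->
  let W := fun x t =>
    tau t * (2 * lap f x t - dotv (grad f x t) (grad f x t)) + f x t - (n.+1)%:R in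
  forall t x, 0 < t < T -> Omega t x ->
    ddt f W x t + lap W x t
      = 2 * tau t * (\sum_(i < n.+1) \sum_(j < n.+1)
            (sp_pd i (sp_pd j f) x t - (i == j)%:R / (2 * tau t)) ^+ 2)
        + dotv (grad W x t) (grad f x t).
Proof.
move=> oOm0 oOm oS hphi hphis hflow hf hE0 htau0 W t x ht hx.
set S := [set p : 'rV[R]_(n.+1) * R | 0 < p.2 < T /\ Omega p.2 p.1] in oS hf.
have Sp : S (x, t) by split.
have hE : forall y s, S (y, s) -> t_pd f y s + \sum_i sp_pd i (sp_pd i f) y s
    = \sum_i sp_pd i f y s * sp_pd i f y s + (n.+1)%:R / (2 * tau s).
  by move=> y s [hs hy]; have := hE0 s y hs hy; rewrite /lap dotv_grad.
have htau : forall y s, S (y, s) -> isd s tau (-1).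
  by move=> y s [hs _]; have [_ h] := htau0 s hs.
have tau0 : tau t != 0 by have [h _] := htau0 t ht; rewrite gt_eqF.
have EW : W = Wf f tau.
  by apply: funext => y; apply: funext => s; rewrite /W /Wf /lap dotv_grad.
rewrite /ddt /lap !dotv_grad EW.
rewrite (Ct hf htau Sp).
have e1 : \sum_i sp_pd i (Wf f tau) x t * sp_pd i f x t
   = \sum_k (tau t * (2 * \sum_i sp_pd k (sp_pd i (sp_pd i f)) x t
     - \sum_i (sp_pd k (sp_pd i f) x t * sp_pd i f x t + sp_pd i f x t * sp_pd k (sp_pd i f) x t))
     + sp_pd k f x t) * sp_pd k f x t.
  by apply: eq_bigr => k _; rewrite (Ck hf tau k Sp).
have e2 : \sum_i sp_pd i (sp_pd i (Wf f tau)) x t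
   = \sum_k (tau t * (2 * \sum_i sp_pd k (sp_pd k (sp_pd i (sp_pd i f))) x t
     - \sum_i ((sp_pd k (sp_pd k (sp_pd i f)) x t * sp_pd i f x t + sp_pd k (sp_pd i f) x t * sp_pd k (sp_pd i f) x t)
              + (sp_pd k (sp_pd i f) x t * sp_pd k (sp_pd i f) x t + sp_pd i f x t * sp_pd k (sp_pd k (sp_pd i f)) x t)))
     + sp_pd k (sp_pd k f) x t).
  by apply: eq_bigr => k _; rewrite (Ckk oS hf tau k Sp).
rewrite e1 e2.
apply: (final_alg (m := n.+1) (tau := tau t) (c := (n.+1)%:R)
  (L := \sum_i sp_pd i (sp_pd i f) x t) (G := \sum_i sp_pd i f x t * sp_pd i f x t)
  (Dtf := t_pd f x t) (a := fun i => sp_pd i f x t)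
  (th := fun k => \sum_i sp_pd k (sp_pd i (sp_pd i f)) x t)
  (q := fun k => \sum_i sp_pd k (sp_pd k (sp_pd i (sp_pd i f))) x t)
  (Dti := fun i => t_pd (sp_pd i f) x t) (Tt := fun i => t_pd (sp_pd i (sp_pd i f)) x t)
  (h := fun i j => sp_pd i (sp_pd j f) x t) (r := fun k i => sp_pd k (sp_pd k (sp_pd i f)) x t)).
- exact: tau0.
- by [].
- by [].
- by [].
- by rewrite addrAC -(hE x t Sp) addrK.
- by move=> i; rewrite (K2 oS hf i Sp) -(B1 oS hf hE i Sp) addrK.
- by move=> i; rewrite (K1 oS hf i Sp) -(B2 oS hf hE i Sp) addrK.
- by move=> i; apply: eq_bigr => k _; rewrite (K3 oS hf k i Sp).
Qed.
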